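(* Consider the problem $$\min_{x_0\in\mathbb{R}^{n_0},\ldots,x_L\in\mathbb{R}^{n_L}}\ f(x_0,\ldots,x_L)+\sum_{l=1}^L\gamma_lT_{K_l,n_l,1}(x_l)+\delta_{\mathcal{C}}(x_0,\ldots,x_L),$$ where $\mathcal{C}\subset\mathrm{dom} f$ and $f+\delta_{\mathcal{C}}$ is directionally differentiable, and let $x^*=(x_0^*,\ldots,x_L^* )$ be a d-stationary point. Fix $l\in[L]$ and suppose: (B1) for every $x=(x_0,\ldots,x_L)\in\mathcal{C}$ and every $i\in[n_l]$, the direction $(0,\ldots,0,-(x_l)_ie_i,0,\ldots,0)$ (nonzero only in block $l$) belongs to $\mathcal{F}(x;\mathcal{C})$; (B2) there is $\Gamma_l>0$ such that $(f+\delta_{\mathcal C})'(x^*;(0,\ldots,d_l,\ldots,0))\le\Gamma_l$ for all $d_l\in\{-1,0,1\}^{n_l}$ with $\|d_l\|_1=1$ and $(0,\ldots,d_l,\ldots,0)\in\mathcal{F}(x^*;\mathcal{C})$. If $\gamma_l>\Gamma_l$, then $T_{K_l,n_l,1}(x_l^* )=0$.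
   Context: $T_{K,n,1}(x)$ is the sum of the $n-K$ smallest values among $|x_1|,\ldots,|x_n|$; $K_l\in\{0,\ldots,n_l-1\}$, $\gamma_l>0$, $n_0\ge0$. $\delta_{\mathcal C}$ is the indicator function of $\mathcal{C}$ (0 on $\mathcal C$, $+\infty$ outside); $f$ takes values in $(-\infty,\infty]$ and $\mathrm{dom} f=\{x\mid f(x)<\infty\}$. $e_i$ is the $i$-th unit vector. Feasible cone: $\mathcal{F}(x;\mathcal{C})=\{d\mid \exists\varsigma'>0:\ x+\varsigma d\in\mathcal{C}\ \forall\varsigma\in(0,\varsigma')\}$ for $x\in\mathcal C$. Directional derivative $h'(x;d)=\lim_{\varsigma\searrow0}(h(x+\varsigma d)-h(x))/\varsigma$; directional differentiability means it exists in $\mathbb{R}$ for $x\in\mathrm{dom}\,h$, $d\in\mathcal F(x;\mathrm{dom}\,h)$. $x^*$ is d-stationary if the objective's directional derivative at $x^*$ is $\ge0$ for all $d\in\mathcal{F}(x^*;\mathcal{C})$. *)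

(* Defs.v *)
From HB Require Import structures.
From mathcomp Require Import all_boot all_order all_algebra.
From mathcomp Require Import all_classical all_reals all_analysis.
Set Implicit Arguments. Unset Strict Implicit. Unset Printing Implicit Defensive.
Import Order.TTheory GRing.Theory Num.Theory.
Import numFieldNormedType.Exports.
Local Open Scope classical_set_scope.
Local Open Scope ring_scope.

Definition blockvec (R : realType) (L : nat) (n : 'I_L.+1 -> nat) : Type :=
  forall l : 'I_L.+1, 'I_(n l) -> R.

Definition bv_step (R : realType) L (n : 'I_L.+1 -> nat)
  (x d : blockvec R n) (s : R) : blockvec R n :=
  fun l i => x l i + s * d l i.

Definition Ttrim (R : realType) (n K : nat) (x : 'I_n -> R) : R :=
  \sum_(a <- take (n - K) (sort (fun a b : R => a <= b) [seq `|x i| | i <- enum 'I_n])) a.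

Definition delta_ind (R : realType) (T : Type) (C : set T) (x : T) : \bar R :=
  if `[< C x >] then 0%E else +oo%E.

Definition edom (T : Type) (R : realType) (h : T -> \bar R) : set T :=
  [set x | (h x < +oo)%E].

Definition feas (R : realType) L (n : 'I_L.+1 -> nat)
  (C : set (blockvec R n)) (x : blockvec R n) : set (blockvec R n) :=
  [set d | exists2 s' : R, 0 < s' & forall s : R, 0 < s < s' -> C (bv_step x d s)].

Definition hasDirDeriv (R : realType) L (n : 'I_L.+1 -> nat)
  (h : blockvec R n -> \bar R) (x d : blockvec R n) (v : R) : Prop :=
  (fun s : R => ((h (bv_step x d s) - h x) * (s^-1)%:E)%E) @ at_right (0:R) --> v%:E.

Definition dir_differentiable (R : realType) L (n : 'I_L.+1 -> nat)
  (h : blockvec R n -> \bar R) : Prop :=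
  forall x, edom h x -> forall d, feas (edom h) x d -> exists v : R, hasDirDeriv h x d v.

Definition in_block (R : realType) L (n : 'I_L.+1 -> nat) (l : 'I_L.+1)
  (d : blockvec R n) : Prop :=
  forall l' : 'I_L.+1, l' != l -> forall j : 'I_(n l'), d l' j = 0.

Definition objective (R : realType) L (n : 'I_L.+1 -> nat) (K : 'I_L.+1 -> nat)
  (gamma : 'I_L.+1 -> R) (f : blockvec R n -> \bar R) (C : set (blockvec R n))
  (x : blockvec R n) : \bar R :=
  (f x + (\sum_(l < L.+1 | (0 < l)%N) gamma l * Ttrim (K l) (x l))%:E + delta_ind R C x)%E.

(* Main.v *)
Require Import Defs.
From HB Require Import structures.
From mathcomp Require Import all_boot all_order all_algebra.
From mathcomp Require Import all_classical all_reals all_analysis.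
From mathcomp Require Import ring lra.
Import Order.TTheory GRing.Theory Num.Theory.
Import numFieldNormedType.Exports.
Local Open Scope classical_set_scope.
Local Open Scope ring_scope.

Lemma sum_take (R : realType) (s : seq R) k : (k <= size s)%N ->
  \sum_(a <- take k s) a = \sum_(0 <= j < k) s`_j.
Proof.
move=> hk; rewrite (big_nth 0) size_take.
have -> : (if k < size s then k else size s)%N = k.
  by case: ltnP => // h; apply/eqP; rewrite eqn_leq hk h.
by apply: eq_big_nat => j /andP[_ hj]; rewrite nth_take.
Qed.

Lemma key (R : realType) (N K : nat) (x : 'I_N -> R) :
  Ttrim K x != 0 -> exists i : 'I_N, 0 < `|x i| /\
  forall (y : 'I_N -> R) (t : R), 0 < t < `|x i| ->
    (forall j, j != i -> y j = x j) -> `|y i| = `|x i| - t ->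
    Ttrim K y = Ttrim K x - t.
Proof.
move=> hT.
set w := [seq `|x j| | j <- enum 'I_N].
have sw : size w = N by rewrite size_map size_enum_ord.
have [Is pIs eIs] := perm_iota_sort (fun a b : R => a <= b) 0 w.
set sx := sort _ w in eIs.
have ssx : size sx = N by rewrite size_sort.
have sIs : size Is = N by rewrite (perm_size pIs) size_iota sw.
have uIs : uniq Is by rewrite (perm_uniq pIs) iota_uniq.
have IsN : forall k, (k < N)%N -> (nth 0 Is k < N)%N.
  move=> k hk; have : nth 0 Is k \in iota 0 (size w).
    by rewrite -(perm_mem pIs) mem_nth // sIs.
  by rewrite mem_iota sw.
have wE : forall p : 'I_N, w`_p = `|x p|.
  by move=> p; rewrite (nth_map p) ?size_enum_ord // nth_ord_enum.
have nn : forall k, 0 <= sx`_k.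
  move=> k; case: (ltnP k N) => hk; last by rewrite nth_default ?ssx.
  have : sx`_k \in w by rewrite -(mem_sort (fun a b : R => a <= b)) mem_nth ?ssx.
  by case/mapP => j _ ->.
have sorted_sx : sorted (fun a b : R => a <= b) sx by apply: sort_sorted; exact: le_total.
pose z := find (fun a : R => 0 < a) sx.
have zlt : (z < N - K)%N.
  rewrite ltnNge; apply/negP => hz; move/eqP: hT; apply.
  rewrite /Ttrim -/w -/sx sum_take ?ssx ?leq_subr //.
  rewrite big_nat big1 // => j /andP[_ hj].
  have := before_find 0 (leq_trans hj hz); rewrite -/z => /negbT.
  by rewrite -leNgt => h; apply/le_anti; rewrite h nn.
have zN : (z < N)%N by apply: leq_trans zlt (leq_subr _ _).
have i0N := IsN z zN.
pose i := Ordinal i0N.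
have sxE : forall k, (k < N)%N -> sx`_k = w`_(nth 0 Is k).
  by move=> k hk; rewrite eIs (nth_map 0) ?sIs.
have xiE : `|x i| = sx`_z by rewrite sxE // -(wE i).
have xpos : 0 < sx`_z by apply: (@nth_find _ 0 (fun a : R => 0 < a)); rewrite has_find ssx.
exists i; split; first by rewrite xiE.
move=> y t /andP[t0 tlt] yE yiE.
set w' := [seq `|y j| | j <- enum 'I_N].
have sw' : size w' = N by rewrite size_map size_enum_ord.
have w'E : forall p : 'I_N, w'`_p = `|y p|.
  by move=> p; rewrite (nth_map p) ?size_enum_ord // nth_ord_enum.
pose sy := [seq nth 0 w' k | k <- Is].
have ssy : size sy = N by rewrite size_map.
have syE : forall k, (k < N)%N -> sy`_k = if k == z then sx`_z - t else sx`_k.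
  move=> k hk; rewrite (nth_map 0) ?sIs // (sxE k hk).
  have hp := IsN k hk.
  have /= -> := w'E (Ordinal hp); have /= -> := wE (Ordinal hp).
  have -> : (k == z) = (Ordinal hp == i).
    by rewrite -val_eqE /= nth_uniq ?sIs.
  case: eqP => [->|/eqP hne]; first by rewrite yiE xiE.
  by rewrite yE.
have sorted_sy : sorted (fun a b : R => a <= b) sy.
  apply/(sortedP 0) => k; rewrite ssy => hk.
  have hk' : (k < N)%N by apply: ltnW.
  move/(sortedP 0): sorted_sx; rewrite ssx => /(_ k hk) hsx.
  rewrite !syE //.
  case: (eqVneq k z) => [ekz|nkz].
    move: hsx; rewrite ekz /= => hsx.
    by rewrite (gtn_eqF (ltnSn z)); apply: le_trans hsx; rewrite lerBlDr lerDl ltW.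
  case: (eqVneq k.+1 z) => [ekz|nkz2]; last by [].
  have : (k < z)%N by rewrite -ekz.
  move/(before_find 0)/negbT; rewrite -leNgt => h.
  have -> : sx`_k = 0 by apply/le_anti; rewrite h nn.
  by rewrite subr_ge0 -xiE ltW.
have psy : perm_eq sy w'.
  have := perm_map (nth 0 w') pIs; rewrite -/sy sw -sw' map_nth_iota0 // take_size.
  done.
have sortE : sort (fun a b : R => a <= b) w' = sy.
  apply: (sorted_eq le_trans le_anti) => //; first by apply: sort_sorted; exact: le_total.
  by rewrite perm_sort perm_sym.
rewrite /Ttrim -/w' -/w sortE -/sx !sum_take ?ssx ?ssy ?leq_subr //.
rewrite !big_mkord (bigD1 (Ordinal zlt)) //= [in RHS](bigD1 (Ordinal zlt)) //=.
rewrite syE // eqxx addrAC; congr (_ + _).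
congr (_ + _); apply: eq_bigr => j hj; rewrite syE; last by apply: leq_trans (ltn_ord j) (leq_subr _ _).
by rewrite ifF //; apply/negbTE; move: hj; rewrite -val_eqE.
Qed.

Theorem mainTheorem11 (R : realType) (L : nat) (n : 'I_L.+1 -> nat)
  (K : 'I_L.+1 -> nat) (gamma : 'I_L.+1 -> R)
  (f : blockvec R n -> \bar R) (C : set (blockvec R n)) (xs : blockvec R n)
  (l : 'I_L.+1) (Gam : R) :
  (forall l' : 'I_L.+1, (0 < l')%N -> (K l' < n l')%N) ->
  (forall l' : 'I_L.+1, (0 < l')%N -> 0 < gamma l') ->
  (forall x, f x != -oo%E) ->
  C `<=` edom f ->
  dir_differentiable (fun x => (f x + delta_ind R C x)%E) ->
  (* x* is a d-stationary point *)
  C xs ->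
  (forall d, feas C xs d ->
     forall v, hasDirDeriv (objective K gamma f C) xs d v -> 0 <= v) ->
  (0 < l)%N ->
  (* (B1) *)
  (forall x, C x -> forall (i : 'I_(n l)) (d : blockvec R n),
     in_block l d -> (forall j, d l j = if j == i then - x l i else 0) ->
     feas C x d) ->
  (* (B2) *)
  0 < Gam ->
  (forall d : blockvec R n, in_block l d ->
     (forall j, d l j \in [:: -1; 0; 1]) -> \sum_j `|d l j| = 1 ->
     feas C xs d ->
     forall v, hasDirDeriv (fun x => (f x + delta_ind R C x)%E) xs d v -> v <= Gam) ->
  gamma l > Gam ->
  Ttrim (K l) (xs l) = 0.
Proof.
move=> hK hg hf hCf hdd hCx hstat hl hB1 hG hB2 hgl.
apply/eqP; apply: contraT => hT.
have [i [xpos hy]] := @key _ _ _ _ hT.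
set m := `|xs l i| in xpos hy.
have m0 : m != 0 by rewrite gt_eqF.
pose d0 : blockvec R n := fun l' j => if (l' == l) && (val j == val i) then - xs l i else 0.
have d0feas : feas C xs d0.
  apply: (hB1 xs hCx i d0).
    by move=> l' hl' j; rewrite /d0 (negbTE hl').
  by move=> j; rewrite /d0 eqxx /= val_eqE.
pose d : blockvec R n := fun l' j => d0 l' j / m.
have dfeas : feas C xs d.
  case: d0feas => s0 s0p hs0; exists (s0 * m); first by rewrite mulr_gt0.
  move=> s /andP[sp ss].
  have -> : bv_step xs d s = bv_step xs d0 (s / m).
    apply: functional_extensionality_dep => l'; apply: funext => j.
    by rewrite /bv_step /d; congr (_ + _); field.
  apply: hs0; rewrite divr_gt0 //= ltr_pdivrMr //.
pose h := fun x => (f x + delta_ind R C x)%E.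
have Ch : forall x, C x -> h x = f x.
  by move=> x hx; rewrite /h /delta_ind asboolT // adde0.
have Cdom : C `<=` edom h by move=> x hx; rewrite /edom /= Ch //; exact: hCf.
have [vf hvf] : exists v, hasDirDeriv h xs d v.
  apply: hdd; first exact: Cdom.
  by case: dfeas => s0 s0p hs0; exists s0 => // s hs; apply: Cdom; apply: hs0.
have dl : forall j, d l j = if j == i then - xs l i / m else 0.
  by move=> j; rewrite /d /d0 eqxx /= val_eqE; case: eqP => //; rewrite mul0r.
have vfG : vf <= Gam.
  apply: (hB2 d) => //.
  - by move=> l' hl' j; rewrite /d /d0 (negbTE hl') mul0r.
  - move=> j; rewrite dl; case: eqP => _; last by rewrite !inE eqxx orbT.
    rewrite !inE /m; case: (lerP 0 (xs l i)) => hx.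
      by rewrite ger0_norm // mulNr divff ?eqxx // -(ger0_norm hx).
    by rewrite ltr0_norm // mulNr invrN mulrN opprK divff ?eqxx ?orbT // lt_eqF.
  - rewrite (bigD1 i) //= big1 ?addr0; last by move=> j hj; rewrite dl (negbTE hj) normr0.
    by rewrite dl eqxx normrM normrN normfV normr_id divff.
have : 0 <= vf - gamma l.
  apply: (hstat d dfeas).
  rewrite /hasDirDeriv EFinD.
  have H : _ @[s --> at_right (0:R)] --> _ := cvgeD (F := at_right (0:R)) (isT : (vf%:E +? (- gamma l)%:E)%E) hvf (cvg_cst (- gamma l)%:E).
  have FF : Filter (at_right (0:R)) by exact _.
  move: H => /(_ FF FF) H.
  refine (cvg_trans _ H); apply: near_eq_cvg.
  case: dfeas => s1 s1p hs1.
  have mp : 0 < Num.min s1 m by rewrite lt_min s1p.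
  near=> s.
  have s0 : 0 < s by near: s; exact: nbhs_right_gt.
  have sm : s < Num.min s1 m by near: s; exact: nbhs_right_lt.
  move: sm; rewrite lt_min => /andP[ss1 ssm].
  set y := bv_step xs d s.
  have Cy : C y by apply: hs1; rewrite s0.
  have yo : forall l', l' != l -> y l' = xs l'.
    move=> l' hl'; apply: funext => j.
    by rewrite /y /bv_step /d /d0 (negbTE hl') /= mul0r mulr0 addr0.
  have Ty : Ttrim (K l) (y l) = Ttrim (K l) (xs l) - s.
    apply: hy.
    - by rewrite s0.
    - by move=> j hj; rewrite /y /bv_step dl (negbTE hj) mulr0 addr0.
    - rewrite /y /bv_step dl eqxx.
      have -> : xs l i + s * (- xs l i / m) = xs l i * (1 - s / m) by field.
      rewrite normrM (ger0_norm (x := 1 - s / m)); first by rewrite -/m; field.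
      by rewrite subr_ge0 ler_pdivrMr // mul1r ltW.
  rewrite /objective /delta_ind !asboolT // !adde0 -/(h xs) -/(h y) !Ch //.
  have hfy := hCf _ Cy; have hfx := hCf _ hCx; move: (hf y) (hf xs) hfy hfx.
  rewrite /edom /=.
  case: (f y) => [a| |] //; case: (f xs) => [b| |] // _ _ _ _.
  set S' := \sum_(l0 < L.+1 | (0 < l0)%N && (l0 != l)) gamma l0 * Ttrim (K l0) (xs l0).
  have -> : \sum_(l0 < L.+1 | (0 < l0)%N) gamma l0 * Ttrim (K l0) (y l0) = gamma l * (Ttrim (K l) (xs l) - s) + S'.
    rewrite (bigD1 l) //= Ty; congr (_ + _); apply: eq_bigr => l' /andP[_ hl'].
    by rewrite yo.
  rewrite (bigD1 l) //= -/S'.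
  transitivity (((a - b) / s - gamma l)%:E); first by [].
  transitivity (((a + (gamma l * (Ttrim (K l) (xs l) - s) + S') - (b + (gamma l * Ttrim (K l) (xs l) + S'))) / s)%:E); last by [].
  congr (_%:E).
  field; exact: lt0r_neq0.
rewrite subr_ge0 => hv; move: (le_lt_trans (le_trans hv vfG) hgl); by rewrite ltxx.
Unshelve. all: by end_near.
Qed.
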